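(* Let $t$ be a positive integer not divisible by $3$. Then the average size of a $(3,t)$-core is $\frac{(t+4)\cdot 2\cdot (t-1)}{24}=\frac{(t+4)(t-1)}{12}$. Equivalently, the sum of the sizes of all $(3,t)$-cores equals $$\frac{(t+4)\cdot 2\cdot (t-1)}{24(t+3)}\binom{t+3}{3}.$$
   Context: A partition $\lambda=(\lambda_1,\dots,\lambda_m)$ is a weakly decreasing sequence of positive integers. Its size is $\lambda_1+\dots+\lambda_m$. The hook length of a cell $B$ of the Young diagram is the number of cells directly to the right of $B$ in its row or directly below $B$ in its column, including $B$ itself. $\lambda$ is an $s$-core if no cell has hook length equal to $s$. An $(s,t)$-core is a partition that is both an $s$-core and a $t$-core. For coprime $s,t$ there are exactly $\binom{s+t}{s}/(s+t)$ $(s,t)$-cores, so in particular finitely many. *)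

(* Defs.v *)
From HB Require Import structures.
From mathcomp Require Import all_boot all_order all_algebra.
Set Implicit Arguments. Unset Strict Implicit. Unset Printing Implicit Defensive.

Definition is_partition (la : seq nat) : bool :=
  sorted geq la && all (fun x => 0 < x) la.

Definition psize (la : seq nat) : nat := sumn la.

Definition col_len (la : seq nat) (j : nat) : nat := count (fun x => j < x) la.

(* hook length of the cell in row i, column j (0-indexed):
   arm = la_i - j - 1 cells to the right, leg = col_len j - i - 1 cells below,
   plus the cell itself. *)
Definition hook (la : seq nat) (i j : nat) : nat :=
  (nth 0 la i - j - 1) + (col_len la j - i - 1) + 1.

Definition is_cell (la : seq nat) (i j : nat) : bool :=
  (i < size la) && (j < nth 0 la i).

Definition is_core (s : nat) (la : seq nat) : bool :=
  all (fun i => all (fun j => hook la i j != s) (iota 0 (nth 0 la i)))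
      (iota 0 (size la)).

Definition is_core2 (s t : nat) (la : seq nat) : bool :=
  [&& is_partition la, is_core s la & is_core t la].

(* Main.v *)
Require Import Defs.
From HB Require Import structures.
From mathcomp Require Import all_boot all_order all_algebra.
From mathcomp Require Import zify ring lra.
Import GRing.Theory Num.Theory.
Set Implicit Arguments. Unset Strict Implicit. Unset Printing Implicit Defensive.

Fixpoint beta (la : seq nat) : seq nat :=
  if la is x :: l then (x + size l) :: beta l else [::].
Fixpoint pob (H : seq nat) : seq nat :=
  if H is h :: l then (h - size l) :: pob l else [::].

Lemma size_beta la : size (beta la) = size la.
Proof. by elim: la => //= x l ->. Qed.
Lemma size_pob H : size (pob H) = size H.
Proof. by elim: H => //= x l ->. Qed.
Lemma pob_beta la : pob (beta la) = la.
Proof. by elim: la => //= x l ->; rewrite size_beta addnK. Qed.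

Lemma nth_beta la i : i < size la ->
  nth 0 (beta la) i = nth 0 la i + (size la - 1 - i).
Proof.
elim: la i => //= x l IH [|i] /= Hi; first lia.
rewrite IH //; lia.
Qed.

Lemma sumn_beta la : sumn (beta la) * 2 + size la = sumn la * 2 + size la * size la.
Proof. elim: la => //= x l IH. nia. Qed.

Lemma geq_tr : transitive geq.
Proof. move=> a b c /= h1 h2; lia. Qed.

Lemma count_gt_nth (s : seq nat) y r : sorted geq s -> r < size s ->
  (y < nth 0 s r) = (r < count (fun x => y < x) s).
Proof.
elim: s r => //= x l IH r Hs Hr.
have Hl : sorted geq l := path_sorted Hs.
have Hall : all (geq x) l := order_path_min geq_tr Hs.
case Hyx: (y < x).
  case: r Hr => [|r] Hr /=; first by rewrite add1n.
  by rewrite IH // add1n ltnS.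
have Hc : count (fun x => y < x) l = 0.
  rewrite (eq_in_count (a2 := pred0)) ?count_pred0 //.
  move=> z /(allP Hall) /= Hz; apply/negbTE; move/negbT: Hyx; lia.
rewrite Hc /=.
case: r Hr => [|r] Hr /=; first by [].
have := (all_nthP 0 Hall) r Hr => /= H.
apply/negbTE; move/negbT: Hyx; lia.
Qed.

Lemma part_mono la r r' : is_partition la -> r <= r' -> r' < size la ->
  nth 0 la r' <= nth 0 la r.
Proof.
case/andP=> Hs _ Hrr Hr'.
apply: (sorted_leq_nth geq_tr (fun x => leqnn x) 0 Hs) => //; rewrite inE; lia.
Qed.

Lemma part_pos la r : is_partition la -> r < size la -> 0 < nth 0 la r.
Proof. by move=> /andP[_ /(all_nthP 0) H] Hr; exact: H. Qed.

Lemma sorted_beta la : is_partition la -> sorted gtn (beta la).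
Proof.
move=> Hp; apply/(sortedP 0) => i; rewrite size_beta => Hi.
rewrite !nth_beta //; last lia.
have := part_mono Hp (leqnSn i) Hi. rewrite /=; lia.
Qed.

Lemma sorted_beta_geq la : is_partition la -> sorted geq (beta la).
Proof. move=> Hp; apply: (sub_sorted _ (sorted_beta Hp)) => x y /= h; lia. Qed.

Lemma hook_eq la i j : is_partition la -> i < size la -> j < nth 0 la i ->
  hook la i j + (size la - col_len la j + j) = nth 0 (beta la) i.
Proof.
move=> Hp Hi Hj.
have Hc : i < col_len la j.
  by rewrite /col_len -count_gt_nth //; case/andP: Hp.
have Hcm : col_len la j <= size la by exact: count_size.
rewrite nth_beta // /hook. lia.
Qed.

Lemma gap_notin la j : is_partition la -> (size la - col_len la j + j) \notin beta la.
Proof.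
move=> Hp; apply/negP => /(nthP 0) [r]; rewrite size_beta => Hr.
rewrite nth_beta //.
have Hcm : col_len la j <= size la by exact: count_size.
have Hs : sorted geq la by case/andP: Hp.
have := count_gt_nth j Hs Hr; rewrite -/(col_len la j).
case Hx: (j < nth 0 la r) => H2.
  symmetry in H2; lia.
move/esym/negbT: H2 => H2. move/negbT: Hx => Hx. lia.
Qed.

Lemma fill la k i : is_partition la -> k \notin beta la -> i < size la ->
  k < nth 0 (beta la) i ->
  exists2 j, j < nth 0 la i & size la - col_len la j + j = k.
Proof.
move=> Hp Hk Hi Hki.
have Hs : sorted geq la by case/andP: Hp.
have Hsb : sorted geq (beta la) := sorted_beta_geq Hp.
pose p := count (fun x => k < x) (beta la).
have Hpm : p <= size la by rewrite -(size_beta la); apply: count_size.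
have Hb r : r < size la -> (k < nth 0 (beta la) r) = (r < p).
  by move=> Hr; apply: count_gt_nth; rewrite ?size_beta.
have Hne r : r < size la -> nth 0 (beta la) r != k.
  by move=> Hr; apply/eqP=> E; move/negP: Hk; apply; rewrite -E mem_nth // size_beta.
have Hip : i < p by rewrite -Hb.
have Hkp : size la <= k + p.
  case: (ltnP p (size la)) => Hpm'; last lia.
  have := Hb p Hpm'; rewrite ltnn => /negbT.
  have := Hne p Hpm'. rewrite nth_beta //. have := part_pos Hp Hpm'. lia.
have Hj r : r < size la -> (k + p - size la < nth 0 la r) = (r < p).
  move=> Hr. case: (ltnP r p) => Hrp.
  - have Hp1 : p.-1 < size la by lia.
    have H1 : k < nth 0 (beta la) p.-1 by rewrite Hb //; lia.
    rewrite nth_beta // in H1.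
    have H2 := part_mono Hp (_ : r <= p.-1) Hp1.
    have : r <= p.-1 by lia. move/H2. lia.
  - have Hpm' : p < size la by lia.
    have H1 := Hb p Hpm'; rewrite ltnn in H1.
    have H3 := Hne p Hpm'.
    rewrite nth_beta // in H1 H3.
    have H2 := part_mono Hp Hrp Hr.
    apply/negbTE. move/negbT: H1 => H1. lia.
have Hc : col_len la (k + p - size la) = p.
  have Hcm : col_len la (k + p - size la) <= size la by exact: count_size.
  have Hcj r : r < size la -> (r < col_len la (k + p - size la)) = (r < p).
    by move=> Hr; rewrite /col_len -count_gt_nth // Hj.
  case: (ltngtP (col_len la (k + p - size la)) p) => // H.
  - by have := Hcj _ (leq_trans H Hpm); rewrite ltnn H.
  - by have := Hcj p (leq_trans H Hcm); rewrite ltnn H.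
exists (k + p - size la); first by rewrite Hj.
rewrite Hc; lia.
Qed.

Definition closed s (H : seq nat) := forall h, h \in H -> s <= h -> (h - s) \in H.

Lemma core_of_closed la s : is_partition la -> 0 < s -> closed s (beta la) -> is_core s la.
Proof.
move=> Hp Hs Hc; apply/allP => i; rewrite mem_iota add0n => /andP[_ Hi].
apply/allP => j; rewrite mem_iota add0n => /andP[_ Hj]; apply/negP => /eqP Hh.
have E := hook_eq Hp Hi Hj. rewrite Hh in E.
have Hin : nth 0 (beta la) i \in beta la by rewrite mem_nth // size_beta.
have Hsb : s <= nth 0 (beta la) i by lia.
have := Hc _ Hin Hsb.
rewrite -E addKn => H.
by have := gap_notin j Hp; rewrite H.
Qed.

Lemma closed_of_core la s : is_partition la -> 0 < s -> is_core s la -> closed s (beta la).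
Proof.
move=> Hp Hs Hcore h /(nthP 0) [i]; rewrite size_beta => Hi <- Hsh.
apply/negPn/negP => Hn.
have Hlt : nth 0 (beta la) i - s < nth 0 (beta la) i.
by move: Hsh; rewrite /=; lia.
have [j Hj Ej] := fill Hp Hn Hi Hlt.
  have E := hook_eq Hp Hi Hj. rewrite Ej in E.
  have Hh : hook la i j = s by move: E Hsh; rewrite /=; lia.
  move/allP: Hcore => /(_ i); rewrite mem_iota add0n Hi => /(_ isT) /allP /(_ j).
  by rewrite mem_iota add0n Hj Hh eqxx => /(_ isT).
Qed.

Definition inAB a b h := ((h %% 3 == 1) && (h %/ 3 < a)) || ((h %% 3 == 2) && (h %/ 3 < b)).
Definition HS a b := rev [seq h <- iota 0 (3*(a+b)+3) | inAB a b h].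
Definition pAB a b := pob (HS a b).

Lemma inAB_0 a b q : inAB a b (3*q) = false.
Proof. rewrite /inAB. apply/negbTE; lia. Qed.
Lemma inAB_1 a b q : inAB a b (3*q+1) = (q < a).
Proof. rewrite /inAB. apply/idP/idP; lia. Qed.
Lemma inAB_2 a b q : inAB a b (3*q+2) = (q < b).
Proof. rewrite /inAB. apply/idP/idP; lia. Qed.

Lemma mem_HS a b h : (h \in HS a b) = inAB a b h.
Proof. rewrite mem_rev mem_filter mem_iota /inAB. apply/idP/idP; lia. Qed.

Lemma sorted_HS a b : sorted gtn (HS a b).
Proof.
rewrite /HS rev_sorted.
apply: (sub_sorted _ (sorted_filter ltn_trans _ (iota_ltn_sorted 0 _))).
by move=> x y /=.
Qed.

Lemma pos_HS a b : all (fun x => 0 < x) (HS a b).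
Proof. apply/allP => h; rewrite mem_HS /inAB; lia. Qed.

Lemma sorted_head_gt h l : sorted gtn (h :: l) -> all (fun x => 0 < x) (h :: l) -> size l < h.
Proof.
elim: l h => [|h' l IH] h /=; first by rewrite andbT.
move=> /andP[Hhh' Hs] /and3P[Hh Hh' Hall].
have := IH h' Hs. rewrite /= Hh' Hall => /(_ isT). lia.
Qed.

Lemma pob_good H : sorted gtn H -> all (fun x => 0 < x) H ->
  beta (pob H) = H /\ is_partition (pob H).
Proof.
elim: H => [|h l IH] //= Hs Hall.
have Hsl : sorted gtn l := path_sorted Hs.
move/andP: (Hall) => [Hh Hall'].
have [Eb Pp] := IH Hsl Hall'.
have Hsz := sorted_head_gt Hs Hall.
split; first by rewrite Eb size_pob subnK // ltnW.
clear IH; move: Pp; case: l Hs Hall Hsl Hall' Eb Hsz => [|h' l'] Hs Hall Hsl Hall' Eb Hsz /=.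
  by move=> _; rewrite /is_partition /= andbT subn0.
rewrite /is_partition /= => /andP[Hs' Hall2].
have Hsz' := sorted_head_gt Hsl Hall'.
move: Hs => /= /andP[Hhh' _].
rewrite -/(path geq (h' - size l') (pob l')) Hs' andbT.
move: Hall2 => /= ->. rewrite andbT. apply/andP; split; lia.
Qed.

Lemma beta_pAB a b : beta (pAB a b) = HS a b.
Proof. by case: (pob_good (sorted_HS a b) (pos_HS a b)). Qed.
Lemma part_pAB a b : is_partition (pAB a b).
Proof. by case: (pob_good (sorted_HS a b) (pos_HS a b)). Qed.

Definition lA c a := [seq 3*i+c | i <- iota 0 a].

Lemma sumn_lA c a : sumn (lA c a) * 2 + 3*a = 3*a*a + 2*c*a.
Proof. elim: a => [|a IH]; first by rewrite /lA /= !muln0.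
rewrite /lA -[a.+1]addn1 iotaD map_cat sumn_cat /=. rewrite /lA in IH. nia. Qed.

Lemma perm_HS a b : perm_eq (HS a b) (lA 1 a ++ lA 2 b).
Proof.
apply: uniq_perm.
- by rewrite rev_uniq filter_uniq // iota_uniq.
- rewrite cat_uniq !map_inj_uniq ?iota_uniq //; try by move=> x y; lia.
  rewrite andbT /=. apply/hasPn => x /mapP [i _ ->]; apply/negP => /mapP [i' _]; lia.
move=> h; rewrite mem_HS mem_cat; apply/idP/orP.
  rewrite /inAB => /orP [/andP[/eqP H1 H2] | /andP[/eqP H1 H2]]; [left|right];
    apply/mapP; exists (h %/ 3); rewrite ?mem_iota; lia.
by case => /mapP [i]; rewrite mem_iota => Hi ->; rewrite /inAB; lia.
Qed.

Lemma psize_pAB a b : psize (pAB a b) * 2 + (a+b)*(a+b) = 3*a*a + 3*b*b + 2*b.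
Proof.
have E := sumn_beta (pAB a b).
rewrite beta_pAB size_pob (perm_sumn (perm_HS a b)) (perm_size (perm_HS a b)) in E.
rewrite sumn_cat size_cat !size_map !size_iota in E.
have E1 := sumn_lA 1 a. have E2 := sumn_lA 2 b.
rewrite /psize. nia.
Qed.

Lemma down3 H q d r : closed 3 H -> (3*(q+d) + r) \in H -> (3*q + r) \in H.
Proof.
move=> Hc; elim: d => [|d IH]; first by rewrite addn0.
move=> Hin; apply: IH.
have := Hc _ Hin (_ : 3 <= 3 * (q + d.+1) + r).
have -> : 3 * (q + d.+1) + r - 3 = 3 * (q + d) + r by lia.
by apply; lia.
Qed.

Lemma init_seg (P : nat -> bool) N : (forall q q', P q -> q' <= q -> P q') ->
  (forall q, N <= q -> ~~ P q) -> exists a, forall q, P q = (q < a).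
Proof.
move=> Hd; elim: N => [|N IH] HN.
  by exists 0 => q; apply/negbTE; exact: HN.
case HPN: (P N).
  exists N.+1 => q; apply/idP/idP => Hq.
    rewrite ltnNge; apply/negP => Hle. by move: (HN q Hle); rewrite Hq.
  by apply: Hd HPN _; rewrite -ltnS.
apply: IH => q Hq. rewrite leq_eqVlt in Hq. case/orP: Hq => [/eqP <-|]; first by rewrite HPN.
exact: HN.
Qed.

Lemma mem_le_sumn (s : seq nat) x : x \in s -> x <= sumn s.
Proof. elim: s => //= y s IH; rewrite inE => /orP[/eqP->|/IH]; lia. Qed.

Lemma beta_struct H : closed 3 H -> 0 \notin H -> exists a b, forall h, (h \in H) = inAB a b h.
Proof.
move=> Hc H0.
have Hd r : forall q q', (3*q+r \in H) -> q' <= q -> 3*q'+r \in H.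
  move=> q q' Hq Hle; apply: (@down3 H q' (q - q') r Hc).
  by rewrite subnKC.
have Hbd r : forall q, (sumn H).+1 <= q -> ~~ (3*q+r \in H).
  move=> q Hq; apply/negP => /mem_le_sumn; lia.
have [a Ha] := @init_seg (fun q => 3*q+1 \in H) _ (Hd 1) (Hbd 1).
have [b Hb] := @init_seg (fun q => 3*q+2 \in H) _ (Hd 2) (Hbd 2).
exists a, b => h.
have Eh : h = 3 * (h %/ 3) + h %% 3 by lia.
have : h %% 3 < 3 by apply: ltn_pmod.
move: Eh; case: (h %% 3) => [|[|[|r]]] // -> _.
- rewrite addn0 inAB_0; apply/negbTE/negP => Hin.
  have := Hd 0 (h %/ 3) 0; rewrite !addn0 muln0 => /(_ Hin (leq0n _)).
  by rewrite (negbTE H0).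
- by rewrite inAB_1 Ha.
- by rewrite inAB_2 Hb.
Qed.

Lemma cons1 a b k : closed (3*k+1) (HS a b) -> a <= k /\ b <= a + k.
Proof.
move=> Hc. split.
- rewrite leqNgt; apply/negP => Hlt.
  have Hin : 3*k+1 \in HS a b by rewrite mem_HS inAB_1.
  have := Hc _ Hin (leqnn _). by rewrite subnn mem_HS -(muln0 3) inAB_0.
- rewrite leqNgt; apply/negP => Hlt.
  have Hin : 3*(a+k)+2 \in HS a b by rewrite mem_HS inAB_2.
  have Hle : 3*k+1 <= 3*(a+k)+2 by lia.
  have := Hc _ Hin Hle.
  have -> : 3*(a+k)+2 - (3*k+1) = 3*a+1 by lia.
  by rewrite mem_HS inAB_1 ltnn.
Qed.

Lemma cons2 a b k : closed (3*k+2) (HS a b) -> b <= k /\ a <= b + k + 1.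
Proof.
move=> Hc. split.
- rewrite leqNgt; apply/negP => Hlt.
  have Hin : 3*k+2 \in HS a b by rewrite mem_HS inAB_2.
  have := Hc _ Hin (leqnn _). by rewrite subnn mem_HS -(muln0 3) inAB_0.
- rewrite leqNgt; apply/negP => Hlt.
  have Hin : 3*(b+k+1)+1 \in HS a b by rewrite mem_HS inAB_1.
  have Hle : 3*k+2 <= 3*(b+k+1)+1 by lia.
  have := Hc _ Hin Hle.
  have -> : 3*(b+k+1)+1 - (3*k+2) = 3*b+2 by lia.
  by rewrite mem_HS inAB_2 ltnn.
Qed.

Lemma closed3_HS a b : closed 3 (HS a b).
Proof. move=> h; rewrite !mem_HS /inAB; lia. Qed.
Lemma closed1_HS a b k : a <= k -> b <= a + k -> closed (3*k+1) (HS a b).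
Proof. move=> H1 H2 h; rewrite !mem_HS /inAB; lia. Qed.
Lemma closed2_HS a b k : b <= k -> a <= b + k + 1 -> closed (3*k+2) (HS a b).
Proof. move=> H1 H2 h; rewrite !mem_HS /inAB; lia. Qed.

Lemma zero_notin la : is_partition la -> 0 \notin beta la.
Proof.
move=> Hp; apply/negP => /(nthP 0) [r]; rewrite size_beta => Hr.
rewrite nth_beta //. move: (part_pos Hp Hr). rewrite /=. lia.
Qed.

Lemma core2_char t la : 0 < t ->
  is_core2 3 t la <-> exists a b, la = pAB a b /\ closed t (HS a b).
Proof.
move=> Ht; split.
- case/and3P => Hp H3 Htc.
  have C3 := closed_of_core Hp (isT : 0 < 3) H3.
  have Ct := closed_of_core Hp Ht Htc.
  have [a [b Hab]] := beta_struct C3 (zero_notin Hp).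
  have E : beta la = HS a b.
    apply: (irr_sorted_eq (leT := gtn)) => //.
    - by move=> x y z /= h1 h2; lia.
    - by move=> x /=; rewrite ltnn.
    - exact: sorted_beta.
    - exact: sorted_HS.
    by move=> h; rewrite Hab mem_HS.
  exists a, b; split; last by rewrite -E.
  by rewrite /pAB -E pob_beta.
- case=> a [b [-> Hc]].
  apply/and3P; split; first exact: part_pAB.
  + apply: core_of_closed => //; first exact: part_pAB.
    rewrite beta_pAB; exact: closed3_HS.
  + apply: core_of_closed => //; first exact: part_pAB.
    by rewrite beta_pAB.
Qed.

Lemma pAB_inj : injective (fun p : nat * nat => pAB p.1 p.2).
Proof.
move=> [a b] [a' b'] /= E.
have E' : HS a b = HS a' b' by rewrite -!beta_pAB E.
have M h : inAB a b h = inAB a' b' h by rewrite -!mem_HS E'.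
have := M (3*a+1); have := M (3*a'+1); have := M (3*b+2); have := M (3*b'+2).
rewrite !inAB_1 !inAB_2 !ltnn => h1 h2 h3 h4.
congr pair; lia.
Qed.

Local Open Scope ring_scope.

Definition Q (a b : nat) : rat := (a%:R)^+2 - a%:R * b%:R + (b%:R)^+2 + b%:R.

Lemma psizeQ a b : (psize (pAB a b))%:R = Q a b.
Proof.
have E := congr1 (fun n => n%:R : rat) (psize_pAB a b).
rewrite /= !natrD !natrM in E. rewrite /Q. lra.
Qed.

Lemma sum_iota_ind (F G : nat -> rat) N : G 0%N = 0 -> (forall n, G n.+1 = G n + F n) ->
  \sum_(i <- iota 0 N) F i = G N.
Proof.
move=> H0 HS; elim: N => [|N IH]; first by rewrite big_nil H0.
by rewrite -[N.+1]addn1 iotaD big_cat /= big_seq1 IH add0n addn1 HS.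
Qed.

Definition I1 (a n : rat) := a^+2 * n - a * n * (n - 1) / 2 + (n - 1) * n * (n + 1) / 3.
Definition I2 (b n : rat) := (n - 1) * n * (2 * n - 1) / 6 - b * n * (n - 1) / 2 + n * (b^+2 + b).

Lemma inner1 a n : \sum_(b <- iota 0 n) Q a b = I1 a%:R n%:R.
Proof.
apply: (sum_iota_ind (G := fun n => I1 a%:R n%:R)); first by rewrite /I1; ring.
by move=> m; rewrite /I1 /Q -[m.+1]addn1 natrD; field.
Qed.

Lemma inner2 b n : \sum_(a <- iota 0 n) Q a b = I2 b%:R n%:R.
Proof.
apply: (sum_iota_ind (G := fun n => I2 b%:R n%:R)); first by rewrite /I2; ring.
by move=> m; rewrite /I2 /Q -[m.+1]addn1 natrD; field.
Qed.

Definition P1 (N k : rat) := - N/12 + N*k/12 + 3*N*k^+2/4 + N*k^+3/3 - 5*N^+2/24 + N^+2*k/4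
  + N^+2*k^+2/4 + N^+3/12 + N^+3*k/3 + 5*N^+4/24.
Definition P2 (N k : rat) := - N/12 + 13*N*k/12 + 5*N*k^+2/4 + N*k^+3/3 + 7*N^+2/24 + 3*N^+2*k/4
  + N^+2*k^+2/4 + 7*N^+3/12 + N^+3*k/3 + 5*N^+4/24.

Lemma outer1 N k : \sum_(a <- iota 0 N) I1 a%:R (a%:R + k%:R + 1) = P1 N%:R k%:R.
Proof.
apply: (sum_iota_ind (G := fun N => P1 N%:R k%:R)); first by rewrite /P1; ring.
by move=> m; rewrite /I1 /P1 -[m.+1]addn1 natrD; field.
Qed.

Lemma outer2 N k : \sum_(b <- iota 0 N) I2 b%:R (b%:R + k%:R + 2) = P2 N%:R k%:R.
Proof.
apply: (sum_iota_ind (G := fun N => P2 N%:R k%:R)); first by rewrite /P2; ring.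
by move=> m; rewrite /I2 /P2 -[m.+1]addn1 natrD; field.
Qed.

Lemma cnt N (c : nat) : \sum_(a <- iota 0 N) (a%:R + c%:R : rat) = N%:R * (N%:R - 1) / 2 + N%:R * c%:R.
Proof.
apply: (sum_iota_ind (G := fun N => N%:R * (N%:R - 1) / 2 + N%:R * c%:R)); first by ring.
by move=> m; rewrite -[m.+1]addn1 natrD; field.
Qed.

Lemma binom3 m : ('C(m + 3, 3))%:R = (m%:R + 3) * (m%:R + 2) * (m%:R + 1) / 6 :> rat.
Proof.
have E := bin_ffact (m + 3) 3.
rewrite addn3 !ffactSS ffactn0 muln1 (_ : 3`! = 6)%N // in E.
rewrite -[m.+3]addn3 -[m.+2]addn2 -[m.+1]addn1 in E.
have E' := congr1 (fun n => n%:R : rat) E.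
rewrite /= !natrM !natrD in E'.
lra.
Qed.

Theorem proposition1p3 (t : nat) (t_pos : (0 < t)%N) (t_ndiv : ~~ (3 %| t)%N) :
  exists L : seq (seq nat),
    [/\ uniq L,
        (forall la : seq nat, la \in L = is_core2 3 t la),
        ((sumn (map psize L))%:R / (size L)%:R : rat)
          = ((t + 4) * 2 * (t - 1))%:R / 24%:R
      & ((sumn (map psize L))%:R : rat)
          = ((t + 4) * 2 * (t - 1))%:R / (24 * (t + 3))%:R * ('C(t + 3, 3))%:R].
Proof.
have [[k Ht]|[k Ht]] : (exists k, t = 3*k+1)%N \/ (exists k, t = 3*k+2)%N.
  have : (t %% 3 = 1 \/ t %% 3 = 2)%N by lia.
  by case=> H; [left|right]; exists (t %/ 3)%N; lia.
- subst t.
  pose pairs := [seq (a, b) | a <- iota 0 k.+1, b <- iota 0 (a + k).+1].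
  have Hpairs a b : ((a, b) \in pairs) = ((a <= k) && (b <= a + k))%N.
    apply/allpairsPdep/andP.
      by case=> [x [y [Hx Hy [-> ->]]]]; rewrite !mem_iota in Hx Hy; split; lia.
    by case=> H1 H2; exists a, b; rewrite !mem_iota; split => //; lia.
  exists [seq pAB p.1 p.2 | p <- pairs].
  have Hsz : (size [seq pAB p.1 p.2 | p <- pairs])%:R =
      (k.+1)%:R * ((k.+1)%:R - 1) / 2 + (k.+1)%:R * (k.+1)%:R :> rat.
    rewrite -cnt size_map size_allpairs_dep sumnE big_map natr_sum.
    by apply: eq_bigr => a _; rewrite size_iota -natrD addnS.
  have Hsum : (sumn (map psize [seq pAB p.1 p.2 | p <- pairs]))%:R = P1 (k.+1)%:R k%:R.
    rewrite -map_comp sumnE big_map big_allpairs_dep natr_sum -outer1.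
    apply: eq_bigr => a _; rewrite natr_sum.
    rewrite (eq_bigr (fun b => Q a b)); last by move=> b _; exact: psizeQ.
    by rewrite inner1 -[(a+k).+1]addn1 !natrD.
  have Hk : (0 <= k%:R :> rat) := ler0n _ _.
  split.
  + rewrite (map_inj_uniq pAB_inj).
    apply: allpairs_uniq_dep; [exact: iota_uniq | by move=> *; exact: iota_uniq |].
    by move=> [x1 y1] [x2 y2] _ _ /= [-> ->].
  + move=> la; apply/mapP/idP.
      case=> [[a b]]; rewrite Hpairs => /andP[H1 H2] ->.
      apply/(@core2_char (3*k+1) (pAB a b) t_pos); exists a, b; split => //.
      exact: closed1_HS.
    move=> Hc2; have [a [b [-> Hc]]] := proj1 (@core2_char (3*k+1) la t_pos) Hc2.
    exists (a, b) => //; rewrite Hpairs; have [H1 H2] := cons1 Hc; by apply/andP.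
  + rewrite Hsum Hsz addnK !natrM !natrD /P1 -[k.+1]addn1 natrD.
    field. apply/negP => /eqP HH. nra.
  + rewrite Hsum binom3 addnK !natrM !natrD /P1 -[k.+1]addn1 natrD.
    field; lra.
- subst t.
  pose pairs := [seq (a, b) | b <- iota 0 k.+1, a <- iota 0 (b + k).+2].
  have Hpairs a b : ((a, b) \in pairs) = ((b <= k) && (a <= b + k + 1))%N.
    apply/allpairsPdep/andP.
      by case=> [y [x [Hy Hx [-> ->]]]]; rewrite !mem_iota in Hx Hy; split; lia.
    by case=> H1 H2; exists b, a; rewrite !mem_iota; split => //; lia.
  exists [seq pAB p.1 p.2 | p <- pairs].
  have Hsz : (size [seq pAB p.1 p.2 | p <- pairs])%:R =
      (k.+1)%:R * ((k.+1)%:R - 1) / 2 + (k.+1)%:R * (k.+2)%:R :> rat.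
    rewrite -cnt size_map size_allpairs_dep sumnE big_map natr_sum.
    by apply: eq_bigr => a _; rewrite size_iota -natrD !addnS.
  have Hsum : (sumn (map psize [seq pAB p.1 p.2 | p <- pairs]))%:R = P2 (k.+1)%:R k%:R.
    rewrite -map_comp sumnE big_map big_allpairs_dep natr_sum -outer2.
    apply: eq_bigr => b _; rewrite natr_sum.
    rewrite (eq_bigr (fun a => Q a b)); last by move=> a _; exact: psizeQ.
    by rewrite inner2 -[(b+k).+2]addn2 !natrD.
  have Hk : (0 <= k%:R :> rat) := ler0n _ _.
  split.
  + rewrite (map_inj_uniq pAB_inj).
    apply: allpairs_uniq_dep; [exact: iota_uniq | by move=> *; exact: iota_uniq |].
    by move=> [x1 y1] [x2 y2] _ _ /= [-> ->].
  + move=> la; apply/mapP/idP.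
      case=> [[a b]]; rewrite Hpairs => /andP[H1 H2] ->.
      apply/(@core2_char (3*k+2) (pAB a b) t_pos); exists a, b; split => //.
      exact: closed2_HS.
    move=> Hc2; have [a [b [-> Hc]]] := proj1 (@core2_char (3*k+2) la t_pos) Hc2.
    exists (a, b) => //; rewrite Hpairs; have [H1 H2] := cons2 Hc; by apply/andP.
  + rewrite Hsum Hsz (_ : (3 * k + 2 - 1 = 3 * k + 1)%N); last by lia.
    rewrite !natrM !natrD /P2 -[k.+2]addn2 -[k.+1]addn1 !natrD.
    field. apply/negP => /eqP HH. nra.
  + rewrite Hsum binom3 (_ : (3 * k + 2 - 1 = 3 * k + 1)%N); last by lia.
    rewrite !natrM !natrD /P2 -[k.+1]addn1 natrD.
    field; lra.
Qed.
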